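(* Let $0<t_0\le1/2$. For every integer $k\ge0$, every $t\in[t_0,1]$, every integer $0\le j\le 2k$ and all $(m_1,\eta_1)\in\mathbb Z\times\mathbb R$, $$|\partial_{\eta_1}^j\rho_k|\le 8^j\frac{(2k)!}{(2k-j)!}\rho_{k-\frac j2}.$$
   Context: For $\sigma\ge0$ and $t\in[t_0,1]$, $\rho_\sigma(m_1,\eta_1)=\big((t-t_0)\eta_1^2+(t-t_0)^2m_1\eta_1+\frac{(t-t_0)^3}{3}m_1^2\big)^\sigma$ (the base is nonnegative), with the convention $\rho_0=1$. *)

(* Defs.v *)
From Stdlib Require Import Reals Lra Arith Factorial.
From Coquelicot Require Import Coquelicot.
Open Scope R_scope.

Definition rho_base (t0 t m eta : R) : R :=
  (t - t0) * eta ^ 2 + (t - t0) ^ 2 * m * eta + (t - t0) ^ 3 / 3 * m ^ 2.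

(* Real power x^s for x >= 0, with the conventions x^0 = 1 (in particular
   0^0 = 1, i.e. rho_0 = 1) and 0^s = 0 for s <> 0. *)
Definition rpow (x s : R) : R :=
  if Req_EM_T s 0 then 1 else if Req_EM_T x 0 then 0 else Rpower x s.

Definition rho (t0 t sigma m eta : R) : R := rpow (rho_base t0 t m eta) sigma.

(* Main.v *)
Require Import Defs.
From Stdlib Require Import Reals Lra Lia Arith Factorial.
From Coquelicot Require Import Coquelicot.
Open Scope R_scope.

Definition P (a m x : R) : R := a * x ^ 2 + a ^ 2 * m * x + a ^ 3 / 3 * m ^ 2.
Definition dP (a m x : R) : R := 2 * a * x + a ^ 2 * m.

Fixpoint w (a : R) (k j n : nat) : R :=
  match j with
  | O => match n with O => 1 | _ => 0 end
  | S j' => (INR (2 * n) - INR j') * (2 * a) * w a k j' n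
            + match n with O => 0 | S n' => INR (k - n') * w a k j' n' end
  end.

Definition phi a m k j n x := dP a m x ^ (2 * n - j) * P a m x ^ (k - n).

Definition F a m k j x := sum_f_R0 (fun n => w a k j n * phi a m k j n x) k.

Lemma w_S a k j n : w a k (S j) n = (INR (2 * n) - INR j) * (2 * a) * w a k j n
            + match n with O => 0 | S n' => INR (k - n') * w a k j n' end.
Proof. reflexivity. Qed.

Lemma w_low a k : forall j n, (2 * n < j)%nat -> w a k j n = 0.
Proof.
induction j as [|j IH]; intros n H; [lia|].
rewrite w_S. assert (H2 : (INR (2 * n) - INR j) * (2 * a) * w a k j n = 0).
{ destruct (Nat.eq_dec (2*n) j) as [E|E].
  - rewrite E. ring.
  - rewrite IH by lia. ring. }
rewrite H2. destruct n as [|n']; [|rewrite (IH n') by lia]; lra.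
Qed.

Lemma w_high a k : forall j n, (j < n)%nat -> w a k j n = 0.
Proof.
induction j as [|j IH]; intros n H.
- destruct n; [lia|reflexivity].
- rewrite w_S. rewrite IH by lia. destruct n as [|n']; [lia|rewrite (IH n') by lia]; lra.
Qed.

Lemma is_derive_sum (g : nat -> R -> R) (g' : nat -> R) x :
  (forall n, is_derive (g n) x (g' n)) ->
  forall N, is_derive (fun y => sum_f_R0 (fun n => g n y) N) x (sum_f_R0 g' N).
Proof.
intros H N; induction N as [|N IH]; simpl.
- apply H.
- apply (is_derive_plus (fun y => sum_f_R0 (fun n => g n y) N) (g (S N))); auto.
Qed.

Lemma sum_shift (g : nat -> R) N :
  sum_f_R0 (fun n => match n with O => 0 | S n' => g n' end) (S N) = sum_f_R0 g N.
Proof.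
induction N as [|N IH].
- simpl. lra.
- rewrite tech5, IH. reflexivity.
Qed.

Lemma sum_zero_after0 (g : nat -> R) N :
  (forall n, (0 < n)%nat -> g n = 0) -> sum_f_R0 g N = g O.
Proof.
intros H; induction N as [|N IH]; simpl; auto. rewrite IH, (H (S N)) by lia. lra.
Qed.

Lemma is_derive_P a m x : is_derive (P a m) x (dP a m x).
Proof. unfold P, dP. auto_derive; auto. ring. Qed.
Lemma is_derive_dP a m x : is_derive (dP a m) x (2 * a).
Proof. unfold dP. auto_derive; auto. ring. Qed.

Lemma F_derive a m k : forall j x, Derive_n (fun y => P a m y ^ k) j x = F a m k j x.
Proof.
induction j as [|j IH]; intros x.
- simpl. unfold F. rewrite sum_zero_after0.
  + simpl. unfold phi. simpl. rewrite Nat.sub_0_r. ring.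
  + intros n Hn. rewrite w_high by lia. ring.
- simpl. rewrite (Derive_ext _ (F a m k j) x IH).
  apply is_derive_unique.
  set (d := fun n => w a k j n *
     (INR (2*n - j) * (2*a) * dP a m x ^ Init.Nat.pred (2*n-j) * P a m x ^ (k-n)
      + dP a m x ^ (2*n-j) * (INR (k-n) * dP a m x * P a m x ^ Init.Nat.pred (k-n)))).
  assert (Hd : is_derive (F a m k j) x (sum_f_R0 d k)).
  { unfold F. apply (is_derive_sum (fun n y => w a k j n * phi a m k j n y) d).
      intros n. unfold phi, d.
      apply (is_derive_scal (fun y => dP a m y ^ (2 * n - j) * P a m y ^ (k - n))).
      apply (is_derive_mult (fun y => dP a m y ^ (2 * n - j)) (fun y => P a m y ^ (k - n))).
      - apply is_derive_pow. apply is_derive_dP.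
      - apply is_derive_pow. apply is_derive_P.
      - intros; apply Rmult_comm. }
  replace (F a m k (S j) x) with (sum_f_R0 d k); [exact Hd|].
  set (A := fun n => w a k j n * (INR (2 * n) - INR j) * (2 * a) * phi a m k (S j) n x).
  set (B := fun n => w a k j n * INR (k - n) * phi a m k (S j) (S n) x).
  set (C := fun n => match n with O => 0 | S n' => B n' end).
  assert (HdAB : forall n, d n = A n + B n).
  { intros n. unfold d, A, B, phi.
    destruct (le_lt_dec j (2 * n)) as [Hl|Hl].
    - replace (2 * n - S j)%nat with (Init.Nat.pred (2 * n - j)) by lia.
      replace (2 * S n - S j)%nat with (S (2 * n - j)) by lia.
      replace (k - S n)%nat with (Init.Nat.pred (k - n)) by lia.
      rewrite (minus_INR _ _ Hl). rewrite <- tech_pow_Rmult. ring.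
    - rewrite w_low by lia. ring. }
  assert (HwC : forall n, w a k (S j) n * phi a m k (S j) n x = A n + C n).
  { intros n. rewrite w_S. unfold A, C, B. destruct n as [|n']; ring. }
  unfold F. rewrite (sum_eq _ _ _ (fun n _ => HwC n)), (sum_eq _ _ _ (fun n _ => HdAB n)).
  rewrite !sum_plus. f_equal.
  destruct k as [|k1].
  - simpl. unfold C, B. rewrite Nat.sub_diag. simpl. ring.
  - unfold C. rewrite sum_shift. rewrite tech5. replace (B (S k1)) with 0 by (unfold B; rewrite Nat.sub_diag; simpl; ring). ring.
Qed.
Fixpoint ff (M j : nat) : R :=
  match j with O => 1 | S j' => ff M j' * INR (M - j') end.

Lemma ff_ge0 M j : 0 <= ff M j.
Proof. induction j; simpl; [lra|]. apply Rmult_le_pos; auto. apply pos_INR. Qed.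

Lemma ff_fact M : forall j, (j <= M)%nat -> ff M j * INR (fact (M - j)) = INR (fact M).
Proof.
induction j as [|j IH]; intros Hj.
- simpl. rewrite Nat.sub_0_r. ring.
- simpl ff. rewrite <- IH by lia.
  replace (M - j)%nat with (S (M - S j)) by lia.
  change (fact (S (M - S j))) with (S (M - S j) * fact (M - S j))%nat.
  rewrite mult_INR. ring.
Qed.

Lemma wbound a k (Ha : 0 <= a <= 1) : forall j, (j <= 2 * k)%nat -> forall n, (n <= k)%nat ->
  Rabs (w a k j n) * 4 ^ n <= 4 ^ j * ff (2 * k) j.
Proof.
induction j as [|j IH]; intros Hj n Hn.
- destruct n; simpl.
  + rewrite Rabs_R1. lra.
  + rewrite Rabs_R0. lra.
- rewrite w_S.
  set (X := 4 ^ j * ff (2 * k) j).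
  assert (HX : 0 <= X) by (unfold X; apply Rmult_le_pos; [apply pow_le; lra| apply ff_ge0]).
  assert (Hjk : INR j + 1 <= INR (2 * k)) by (rewrite <- S_INR; apply le_INR; lia).
  assert (H4n : 0 < 4 ^ n) by (apply pow_lt; lra).
  assert (T1 : Rabs ((INR (2 * n) - INR j) * (2 * a) * w a k j n) * 4 ^ n
               <= 2 * (INR (2 * k) - INR j) * X).
  { destruct (le_lt_dec j (2 * n)) as [Hl|Hl].
    - assert (E1 : INR j <= INR (2 * n)) by (apply le_INR; lia).
      assert (E2 : INR (2 * n) <= INR (2 * k)) by (apply le_INR; lia).
      rewrite (Rabs_mult ((INR (2 * n) - INR j) * (2 * a))).
      rewrite (Rabs_right ((INR (2 * n) - INR j) * (2 * a))) by (apply Rle_ge, Rmult_le_pos; lra).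
      specialize (IH ltac:(lia) n Hn). fold X in IH.
      rewrite Rmult_assoc.
      apply Rmult_le_compat; try lra.
      + apply Rmult_le_pos; lra.
      + apply Rmult_le_pos; [apply Rabs_pos|lra].
      + nra.
    - rewrite (w_low a k j n Hl), Rmult_0_r, Rabs_R0. nra. }
  assert (T2 : Rabs (match n with O => 0 | S n' => INR (k - n') * w a k j n' end) * 4 ^ n
               <= 2 * (INR (2 * k) - INR j) * X).
  { destruct n as [|n'].
    - rewrite Rabs_R0. nra.
    - destruct (le_lt_dec j (2 * n')) as [Hl|Hl].
      + rewrite Rabs_mult, Rabs_right by (apply Rle_ge, pos_INR).
        rewrite minus_INR by lia.
        assert (E1 : INR j <= 2 * INR n') by (rewrite <- (mult_INR 2); apply le_INR; lia).
        assert (E2 : INR n' + 1 <= INR k) by (rewrite <- S_INR; apply le_INR; lia).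
        rewrite mult_INR in *. simpl INR in *.
        specialize (IH ltac:(lia) n' ltac:(lia)). fold X in IH.
        change (4 ^ S n') with (4 * 4 ^ n').
        replace ((INR k - INR n') * Rabs (w a k j n') * (4 * 4 ^ n'))
          with (4 * (INR k - INR n') * (Rabs (w a k j n') * 4 ^ n')) by ring.
        apply Rmult_le_compat; try lra.
        apply Rmult_le_pos; [apply Rabs_pos| apply pow_le; lra].
      + rewrite (w_low a k j n' Hl), Rmult_0_r, Rabs_R0. nra. }
  change (ff (2*k) (S j)) with (ff (2*k) j * INR (2*k - j)).
  change (4 ^ S j) with (4 * 4 ^ j).
  rewrite minus_INR by lia.
  apply Rle_trans with ((Rabs ((INR (2 * n) - INR j) * (2 * a) * w a k j n) +
     Rabs (match n with O => 0 | S n' => INR (k - n') * w a k j n' end)) * 4 ^ n).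
  + apply Rmult_le_compat_r; [lra| apply Rabs_triang].
  + rewrite Rmult_plus_distr_r. unfold X in T1, T2. lra.
Qed.

Lemma P_nonneg a m x : 0 <= a -> 0 <= P a m x.
Proof.
intros Ha. unfold P.
replace (a * x ^ 2 + a ^ 2 * m * x + a ^ 3 / 3 * m ^ 2)
  with (a * (x + a * m / 2) ^ 2 + a ^ 3 * m ^ 2 / 12) by field.
assert (0 <= a * (x + a * m / 2) ^ 2) by (apply Rmult_le_pos; [lra| apply pow2_ge_0]).
assert (0 <= a ^ 3 * m ^ 2) by (apply Rmult_le_pos; [apply pow_le; lra| apply pow2_ge_0]).
lra.
Qed.

Lemma dP_abs a m x : 0 <= a <= 1 -> Rabs (dP a m x) <= 2 * sqrt (P a m x).
Proof.
intros Ha.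
assert (HP := P_nonneg a m x (proj1 Ha)).
assert (Hsq : dP a m x ^ 2 <= 4 * P a m x).
{ assert (E : 4 * a * P a m x - dP a m x ^ 2 = a ^ 4 * m ^ 2 / 3) by (unfold P, dP; field).
  assert (0 <= a ^ 4 * m ^ 2) by (apply Rmult_le_pos; [apply pow_le; lra| apply pow2_ge_0]).
  assert (4 * a * P a m x <= 4 * P a m x) by nra.
  lra. }
rewrite <- sqrt_Rsqr_abs.
replace 2 with (sqrt 4).
2:{ replace 4 with (2 * 2) by ring. rewrite sqrt_square; lra. }
rewrite <- sqrt_mult by lra.
apply sqrt_le_1_alt. unfold Rsqr. simpl in Hsq. lra.
Qed.

Lemma sum_bound (t : nat -> R) (C : R) (j N : nat) :
  0 <= C -> (forall n, (n <= N)%nat -> t n <= C) ->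
  (forall n, (n <= N)%nat -> (j < n)%nat -> t n <= 0) ->
  sum_f_R0 t N <= INR (S j) * C.
Proof.
intros HC H1 H2.
assert (G : forall M, (M <= N)%nat -> sum_f_R0 t M <= INR (Nat.min (S M) (S j)) * C).
{ induction M as [|M IH]; intros HM.
  - simpl. rewrite Rmult_1_l. apply H1; lia.
  - simpl sum_f_R0. specialize (IH ltac:(lia)).
    destruct (le_lt_dec (S M) j) as [L|L].
    + rewrite Nat.min_l in IH by lia. rewrite Nat.min_l by lia.
      rewrite (S_INR (S M)). specialize (H1 (S M) HM). lra.
    + rewrite Nat.min_r in IH by lia. rewrite Nat.min_r by lia.
      specialize (H2 (S M) HM L). lra. }
apply Rle_trans with (INR (Nat.min (S N) (S j)) * C); [apply G; lia|].
apply Rmult_le_compat_r; auto. apply le_INR. lia.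
Qed.

Lemma S_le_4pow j : INR (S j) <= 4 ^ j.
Proof.
induction j as [|j IH]; [simpl; lra|]. rewrite (S_INR (S j)). change (4 ^ S j) with (4 * 4 ^ j).
assert (1 <= 4 ^ j) by (apply pow_R1_Rle; lra). lra.
Qed.

Lemma term_bound a m k j n x (Ha : 0 <= a <= 1) (Hj : (j <= 2 * k)%nat) (Hn : (n <= k)%nat) :
  Rabs (w a k j n * phi a m k j n x) <= 2 ^ j * ff (2 * k) j * sqrt (P a m x) ^ (2 * k - j).
Proof.
set (s := sqrt (P a m x)).
assert (HP := P_nonneg a m x (proj1 Ha)).
assert (Hs : 0 <= s) by apply sqrt_pos.
assert (HC : 0 <= 2 ^ j * ff (2 * k) j * s ^ (2 * k - j)).
{ apply Rmult_le_pos; [apply Rmult_le_pos; [apply pow_le; lra| apply ff_ge0]| apply pow_le; auto]. }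
destruct (le_lt_dec j (2 * n)) as [L1|L1]; [|rewrite w_low, Rmult_0_l, Rabs_R0 by lia; auto].
destruct (le_lt_dec n j) as [L2|L2]; [|rewrite w_high, Rmult_0_l, Rabs_R0 by lia; auto].
assert (HW := wbound a k Ha j Hj n Hn).
unfold phi. rewrite !Rabs_mult, <- !RPow_abs, (Rabs_right (P a m x)) by lra.
assert (E1 : Rabs (dP a m x) ^ (2 * n - j) <= 2 ^ (2 * n - j) * s ^ (2 * n - j)).
{ rewrite <- Rpow_mult_distr. apply pow_incr. split; [apply Rabs_pos| apply dP_abs; auto]. }
assert (E2 : P a m x ^ (k - n) = s ^ (2 * (k - n))).
{ rewrite pow_mult. unfold s. simpl. rewrite Rmult_1_r, sqrt_sqrt; auto. }
assert (E3 : s ^ (2 * n - j) * s ^ (2 * (k - n)) = s ^ (2 * k - j)).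
{ rewrite <- pow_add. f_equal. lia. }
assert (E4 : Rabs (w a k j n) * 2 ^ (2 * n - j) <= 2 ^ j * ff (2 * k) j).
{ apply Rmult_le_reg_l with (2 ^ j); [apply pow_lt; lra|].
  replace (2 ^ j * (Rabs (w a k j n) * 2 ^ (2 * n - j))) with (Rabs (w a k j n) * 4 ^ n).
  - replace (2 ^ j * (2 ^ j * ff (2 * k) j)) with (4 ^ j * ff (2 * k) j); auto.
    replace 4 with (2 ^ 2) by lra. rewrite <- pow_mult. replace (2 * j)%nat with (j + j)%nat by lia.
    rewrite pow_add. ring.
  - replace 4 with (2 ^ 2) by lra. rewrite <- pow_mult.
    assert (Q : 2 ^ (2 * n) = 2 ^ j * 2 ^ (2 * n - j)) by (rewrite <- pow_add; f_equal; lia).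
    rewrite Q. ring. }
rewrite E2.
assert (0 <= Rabs (w a k j n)) by apply Rabs_pos.
assert (0 <= Rabs (dP a m x) ^ (2 * n - j)) by (apply pow_le; apply Rabs_pos).
assert (0 <= s ^ (2 * (k - n))) by (apply pow_le; auto).
apply Rle_trans with (Rabs (w a k j n) * (2 ^ (2 * n - j) * s ^ (2 * n - j) * s ^ (2 * (k - n)))).
- apply Rmult_le_compat_l; auto. apply Rmult_le_compat_r; auto.
- rewrite Rmult_assoc, E3, <- Rmult_assoc. apply Rmult_le_compat_r; [apply pow_le; auto| auto].
Qed.

Lemma rpow_nat x k : 0 <= x -> rpow x (INR k) = x ^ k.
Proof.
intros Hx. unfold rpow.
destruct (Req_EM_T (INR k) 0) as [E|E].
- replace k with 0%nat by (symmetry; apply INR_eq; simpl; auto). reflexivity.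
- destruct (Req_EM_T x 0) as [E2|E2].
  + subst. rewrite pow_i; auto. destruct k; [simpl in E; lra| lia].
  + apply Rpower_pow. lra.
Qed.

Lemma rpow_half x k j : 0 <= x -> (j <= 2 * k)%nat ->
  rpow x (INR k - INR j / 2) = sqrt x ^ (2 * k - j).
Proof.
intros Hx Hj. unfold rpow.
destruct (Req_EM_T (INR k - INR j / 2) 0) as [E|E].
- assert (INR j = INR (2 * k)) by (rewrite mult_INR; simpl; lra).
  apply INR_eq in H. replace (2 * k - j)%nat with 0%nat by lia. reflexivity.
- destruct (Req_EM_T x 0) as [E2|E2].
  + subst. rewrite sqrt_0, pow_i; auto.
    destruct (Nat.eq_dec j (2 * k)); [|lia]. subst. rewrite mult_INR in E. simpl in E. lra.
  + assert (Hx' : 0 < x) by lra.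
    rewrite <- Rpower_pow by (apply sqrt_lt_R0; auto).
    rewrite <- Rpower_sqrt by auto. rewrite Rpower_mult. f_equal.
    rewrite minus_INR by auto. rewrite mult_INR. simpl. field.
Qed.

Theorem lemma4p1 (t0 : R) (Ht0 : 0 < t0 <= 1 / 2) :
  forall (k : nat) (t : R), t0 <= t <= 1 ->
  forall (j : nat), (j <= 2 * k)%nat ->
  forall (m1 : Z) (eta1 : R),
    Rabs (Derive_n (fun eta => rho t0 t (INR k) (IZR m1) eta) j eta1)
    <= 8 ^ j * (INR (fact (2 * k)) / INR (fact (2 * k - j)))
       * rho t0 t (INR k - INR j / 2) (IZR m1) eta1.
Proof.
intros k t Ht j Hj m1 eta1.
assert (Ha : 0 <= t - t0 <= 1) by lra.
set (a := t - t0) in *. set (m := IZR m1).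
assert (Hrho : forall s eta, rho t0 t s m eta = rpow (P a m eta) s) by reflexivity.
rewrite (Derive_n_ext _ (fun y => P a m y ^ k)).
2:{ intros y. rewrite Hrho. apply rpow_nat. apply P_nonneg; lra. }
rewrite F_derive, Hrho, rpow_half by (auto; apply P_nonneg; lra).
replace (INR (fact (2 * k)) / INR (fact (2 * k - j))) with (ff (2 * k) j).
2:{ rewrite <- (ff_fact (2 * k) j Hj). field. apply INR_fact_neq_0. }
unfold F.
eapply Rle_trans; [apply sum_f_R0_triangle|].
apply Rle_trans with (INR (S j) * (2 ^ j * ff (2 * k) j * sqrt (P a m eta1) ^ (2 * k - j))).
- apply sum_bound.
  + apply Rmult_le_pos; [apply Rmult_le_pos; [apply pow_le; lra| apply ff_ge0]| apply pow_le, sqrt_pos].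
  + intros n Hn. apply term_bound; auto.
  + intros n Hn Hjn. rewrite w_high, Rmult_0_l, Rabs_R0 by auto. lra.
- assert (H4 := S_le_4pow j).
  assert (0 <= ff (2 * k) j * sqrt (P a m eta1) ^ (2 * k - j))
    by (apply Rmult_le_pos; [apply ff_ge0| apply pow_le, sqrt_pos]).
  assert (0 < 2 ^ j) by (apply pow_lt; lra).
  replace (8 ^ j) with (2 ^ j * 4 ^ j) by (rewrite <- Rpow_mult_distr; f_equal; lra).
  replace (INR (S j) * (2 ^ j * ff (2 * k) j * sqrt (P a m eta1) ^ (2 * k - j)))
    with (2 ^ j * INR (S j) * (ff (2 * k) j * sqrt (P a m eta1) ^ (2 * k - j))) by ring.
  replace (2 ^ j * 4 ^ j * ff (2 * k) j * sqrt (P a m eta1) ^ (2 * k - j))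
    with (2 ^ j * 4 ^ j * (ff (2 * k) j * sqrt (P a m eta1) ^ (2 * k - j))) by ring.
  apply Rmult_le_compat_r; auto. apply Rmult_le_compat_l; lra.
Qed.
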